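(* Let $(X,d_X)$ and $(\Lambda,d_\Lambda)$ be complete metric spaces and, for each $\lambda\in\Lambda$, let $S_\lambda(\cdot,\cdot)$ be a process on $X$. Suppose: (L1) for every $\lambda\in\Lambda$, $S_\lambda(\cdot,\cdot)$ has a pullback attractor $\mathscr A_\lambda(\cdot)=\{\mathscr A_\lambda(t):t\in\mathbb R\}$; and that one of the following two sets of hypotheses holds: (i) there is a compact set $D\subseteq X$ with $\mathscr A_\lambda(t)\subseteq D$ for every $\lambda\in\Lambda$ and every $t\in\mathbb R$, and for every $s\in\mathbb R$ and $t\ge s$ the map $\lambda\mapsto S_\lambda(t,s)x$ is continuous, uniformly for $x$ in compact subsets of $X$; or (ii) there is a bounded set $D\subseteq X$ with $\mathscr A_\lambda(t)\subseteq D$ for every $\lambda\in\Lambda$ and every $t\in\mathbb R$; for every $s\in\mathbb R$ and $t\ge s$ the map $\lambda\mapsto S_\lambda(t,s)x$ is continuous, uniformly for $x$ in bounded subsets of $X$; and for any $\lambda_0\in\Lambda$ and $t\in\mathbb R$ there exists $\delta>0$ such that $\overline{\bigcup_{\lambda\in B_\Lambda(\lambda_0,\delta)}\mathscr A_\lambda(t)}$ is compact, where $B_\Lambda(\lambda_0,\delta)=\{\lambda\in\Lambda: d_\Lambda(\lambda,\lambda_0)<\delta\}$. Then there exists a residual set $\Lambda_*\subseteq\Lambda$ such that for every $t\in\mathbb R$ the map $\lambda\mapsto\mathscr A_\lambda(t)$ (into the space of nonempty closed bounded subsets of $X$ with the Hausdorff metric) is continuous at each $\lambda\in\Lambda_*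$.
   Context: A process on a complete metric space $(X,d_X)$ is a two-parameter family of maps $S(t,s):X\to X$, $s\in\mathbb R$, $t\ge s$, such that $S(t,t)=\mathrm{id}$, $S(t,\tau)S(\tau,s)=S(t,s)$ for all $t\ge\tau\ge s$, and $S(t,s)x$ is continuous in $(x,t,s)$. For subsets $A,C$ of a metric space $Y$, the Hausdorff semi-distance is $\rho_Y(A,C)=\sup_{a\in A}\inf_{c\in C}d_Y(a,c)$ and the Hausdorff distance is $\Delta_Y(A,C)=\max(\rho_Y(A,C),\rho_Y(C,A))$; $CB(Y)$ denotes the set of nonempty closed bounded subsets of $Y$ with metric $\Delta_Y$. A family of compact sets $\mathscr A(\cdot)=\{\mathscr A(t):t\in\mathbb R\}$ is the pullback attractor of the process $S$ if (A1) $S(t,s)\mathscr A(s)=\mathscr A(t)$ for all $t\ge s$; (A2) for every bounded $B\subseteq X$ and $t\in\mathbb R$, $\rho_X(S(t,s)B,\mathscr A(t))\to0$ as $s\to-\infty$; (A3) if $C(\cdot)$ is any other family of compact sets satisfying (A1) and (A2) then $\mathscr A(t)\subseteq C(t)$ for all $t$. A subset of $\Lambda$ is residual if its complement is a countable union of nowhere dense sets. *)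

(* Defs.v *)
From Stdlib Require Import Reals.
Open Scope R_scope.

Section MetricDefs.
Context {T : Type} (d : T -> T -> R).

Definition is_metric : Prop :=
  (forall x y, 0 <= d x y) /\
  (forall x y, d x y = 0 <-> x = y) /\
  (forall x y, d x y = d y x) /\
  (forall x y z, d x z <= d x y + d y z).

Definition cauchy_seq (u : nat -> T) : Prop :=
  forall eps, 0 < eps -> exists N, forall m n, (N <= m)%nat -> (N <= n)%nat ->
    d (u m) (u n) < eps.

Definition seq_converges (u : nat -> T) (l : T) : Prop :=
  forall eps, 0 < eps -> exists N, forall n, (N <= n)%nat -> d (u n) l < eps.

Definition complete_metric : Prop :=
  is_metric /\ forall u, cauchy_seq u -> exists l, seq_converges u l.

Definition ball (x0 : T) (r : R) : T -> Prop := fun x => d x x0 < r.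

Definition subset (A B : T -> Prop) : Prop := forall x, A x -> B x.

Definition is_open (U : T -> Prop) : Prop :=
  forall x, U x -> exists e, 0 < e /\ subset (ball x e) U.

Definition is_compact (K : T -> Prop) : Prop :=
  forall (I : Type) (U : I -> T -> Prop),
    (forall i, is_open (U i)) ->
    (forall x, K x -> exists i, U i x) ->
    exists l : list I, forall x, K x -> exists i, List.In i l /\ U i x.

Definition is_bounded (A : T -> Prop) : Prop :=
  exists x0 r, forall a, A a -> d a x0 <= r.

Definition closure (A : T -> Prop) : T -> Prop :=
  fun x => forall eps, 0 < eps -> exists a, A a /\ d x a < eps.

Definition nowhere_dense (N : T -> Prop) : Prop :=
  ~ (exists x e, 0 < e /\ subset (ball x e) (closure N)).

Definition residual (L : T -> Prop) : Prop :=
  exists N : nat -> T -> Prop,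
    (forall n, nowhere_dense (N n)) /\
    (forall x, ~ L x <-> exists n, N n x).

(* "rho_T(A, C) < eps" unfolded: every point of A is within eps of C *)
Definition hsemi_small (A C : T -> Prop) (eps : R) : Prop :=
  forall a, A a -> exists c, C c /\ d a c < eps.

Definition hdist_small (A C : T -> Prop) (eps : R) : Prop :=
  hsemi_small A C eps /\ hsemi_small C A eps.

End MetricDefs.

Section Process.
Context {X : Type} (dX : X -> X -> R).

(* S t s : X -> X for s <= t (values for t < s are irrelevant) *)
Definition is_process (S : R -> R -> X -> X) : Prop :=
  (forall t x, S t t x = x) /\
  (forall t tau s x, s <= tau -> tau <= t -> S t tau (S tau s x) = S t s x) /\
  (forall x t s, s <= t -> forall eps, 0 < eps -> exists delta, 0 < delta /\
     forall x' t' s', s' <= t' -> dX x x' < delta -> Rabs (t - t') < delta ->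
       Rabs (s - s') < delta -> dX (S t s x) (S t' s' x') < eps).

Definition invariant (S : R -> R -> X -> X) (A : R -> X -> Prop) : Prop :=
  forall t s, s <= t -> forall y, A t y <-> exists x, A s x /\ y = S t s x.

Definition pullback_attracting (S : R -> R -> X -> X) (A : R -> X -> Prop) : Prop :=
  forall B, is_bounded dX B -> forall t eps, 0 < eps -> exists s0, forall s,
    s <= s0 -> s <= t ->
    hsemi_small dX (fun y => exists b, B b /\ y = S t s b) (A t) eps.

Definition is_pullback_attractor (S : R -> R -> X -> X) (A : R -> X -> Prop) : Prop :=
  (forall t, is_compact dX (A t)) /\
  invariant S A /\
  pullback_attracting S A /\
  (forall C : R -> X -> Prop,
     (forall t, is_compact dX (C t)) -> invariant S C -> pullback_attracting S C ->
     forall t, subset (A t) (C t)).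

End Process.

(* Main.v *)
Require Import Defs.
From Stdlib Require Import Reals Lra Lia Classical ZArith List ClassicalEpsilon.
From Stdlib Require Cantor.
Open Scope R_scope.

Section M.
Context {T : Type} (d : T -> T -> R) (Hm : is_metric d).

Lemma d_pos x y : 0 <= d x y. Proof. destruct Hm as [H _]; apply H. Qed.
Lemma d_sym x y : d x y = d y x. Proof. destruct Hm as [_ [_ [H _]]]; apply H. Qed.
Lemma d_tri x y z : d x z <= d x y + d y z. Proof. destruct Hm as [_ [_ [_ H]]]; apply H. Qed.
Lemma d_refl x : d x x = 0. Proof. destruct Hm as [_ [H _]]; apply H; reflexivity. Qed.

Lemma ball_open x r : is_open d (ball d x r).
Proof.
  intros y Hy. unfold ball in *. exists (r - d y x). split; [lra|].
  intros z Hz; unfold ball in *. pose proof (d_tri z y x). lra.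
Qed.

Lemma le_of_lt_all a b : (forall eta, 0 < eta -> a < b + eta) -> a <= b.
Proof.
  intros H. destruct (Rle_or_lt a b); auto. specialize (H (a - b)). lra.
Qed.

Lemma baire (Hc : forall u, cauchy_seq d u -> exists l, seq_converges d u l)
  (E : nat -> T -> Prop)
  (Hcl : forall N, subset (closure d (E N)) (E N))
  (Hcov : forall z, exists N, E N z)
  x r (Hr : 0 < r) :
  exists N y s, 0 < s /\ subset (ball d y s) (E N) /\ subset (ball d y s) (ball d x r).
Proof.
  apply NNPP; intro Hn.
  set (P := fun p : T * R => 0 < snd p /\ forall z, d z (fst p) <= snd p -> d z x < r).
  set (Q := fun (k : nat) (p p' : T * R) =>
      0 < snd p' /\ snd p' <= snd p / 2 /\ d (fst p') (fst p) + snd p' <= snd p /\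
      forall w, d w (fst p') <= snd p' -> ~ E k w).
  assert (Hstep : forall k p, exists p', P p -> Q k p p').
  { intros k [y s].
    destruct (classic (P (y, s))) as [HP|HP]; [| exists (y, s); tauto].
    destruct HP as [Hs Hin]; simpl in Hs, Hin.
    assert (Hex : exists z, d z y < s / 2 /\ ~ E k z).
    { apply NNPP; intro Hno. apply Hn. exists k, y, (s/2). split; [lra|]. split.
      - intros z Hz. unfold ball in Hz. apply NNPP; intro Hz'. apply Hno. exists z; auto.
      - intros z Hz. unfold ball in *. apply Hin; simpl; lra. }
    destruct Hex as [z [Hz1 Hz2]].
    assert (Hrho : exists rho, 0 < rho /\ forall a, E k a -> ~ d z a < rho).
    { apply NNPP; intro Hno. apply Hz2. apply Hcl. intros eps Heps.
      apply NNPP; intro H2. apply Hno. exists eps. split; auto.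
      intros a Ha Hd. apply H2. exists a; auto. }
    destruct Hrho as [rho [Hrho1 Hrho2]].
    exists (z, Rmin (rho/2) (s/2 - d z y)). intros _. unfold Q; simpl.
    pose proof (Rmin_l (rho/2) (s/2 - d z y)). pose proof (Rmin_r (rho/2) (s/2 - d z y)).
    assert (0 < Rmin (rho/2) (s/2 - d z y)) by (apply Rmin_glb_lt; lra).
    pose proof (d_pos z y). split; [lra|]. split; [lra|]. split; [lra|].
    intros w Hw Ew. apply (Hrho2 w Ew). rewrite d_sym. lra. }
  assert (Hf : forall k p, { p' | P p -> Q k p p' }).
  { intros k p. apply constructive_indefinite_description. apply Hstep. }
  set (seq := fix seq (n : nat) : T * R :=
         match n with O => (x, r/2) | S n' => proj1_sig (Hf n' (seq n')) end).
  assert (HP : forall n, P (seq n)).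
  { induction n.
    - simpl. split; simpl; [lra|]. intros; lra.
    - simpl. destruct (Hf n (seq n)) as [p' Hp']. simpl.
      destruct (Hp' IHn) as [Q1 [Q2 [Q3 Q4]]].
      destruct IHn as [_ Hin]. split; auto. intros z Hz. apply Hin.
      pose proof (d_tri z (fst p') (fst (seq n))). lra. }
  assert (HQ : forall n, Q n (seq n) (seq (S n))).
  { intro n. simpl. destruct (Hf n (seq n)) as [p' Hp']. simpl. auto. }
  set (y := fun n => fst (seq n)). set (s := fun n => snd (seq n)).
  assert (Hnest : forall k j, d (y (j + k)%nat) (y k) + s (j + k)%nat <= s k).
  { intros k j. induction j.
    - simpl. rewrite d_refl. lra.
    - replace (S j + k)%nat with (S (j + k)) by lia.
      destruct (HQ (j + k)%nat) as [_ [_ [H3 _]]]. unfold y, s in *.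
      pose proof (d_tri (fst (seq (S (j+k))%nat)) (fst (seq (j+k)%nat)) (fst (seq k))). lra. }
  assert (Hspos : forall n, 0 < s n) by (intro n; apply (HP n)).
  assert (Hshalf : forall n, s n <= r / 2 / 2 ^ n).
  { induction n.
    - unfold s; simpl. lra.
    - destruct (HQ n) as [_ [H2 _]]. unfold s in *. simpl.
      pose proof (pow_lt 2 n ltac:(lra)).
      replace (r / 2 / (2 * 2 ^ n)) with (r / 2 / 2 ^ n / 2) by (field; lra). simpl in H2. lra. }
  assert (Hsmall : forall eps, 0 < eps -> exists N, s N < eps).
  { intros eps Heps.
    destruct (archimed (r / eps)) as [Hup _].
    assert (Hz : (0 <= up (r / eps))%Z).
    { apply le_IZR. assert (0 < r / eps) by (apply Rdiv_lt_0_compat; lra). lra. }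
    exists (Z.to_nat (up (r / eps))).
    assert (Hpow : forall n, INR n < 2 ^ n).
    { intro n; induction n; [simpl; lra|]. rewrite S_INR. simpl. pose proof (pos_INR n). assert (1 <= 2 ^ n) by (apply pow_R1_Rle; lra). lra. }
    pose proof (Hpow (Z.to_nat (up (r / eps)))).
    rewrite INR_IZR_INZ, Z2Nat.id in H by auto.
    pose proof (Hshalf (Z.to_nat (up (r / eps)))).
    set (P2 := 2 ^ Z.to_nat (up (r / eps))) in *.
    assert (r < eps * P2).
    { apply (Rmult_lt_reg_r (/ eps)). apply Rinv_0_lt_compat; lra.
      replace (eps * P2 * / eps) with P2 by (field; lra). unfold Rdiv in *. lra. }
    assert (0 < P2) by (unfold P2; apply pow_lt; lra).
    assert (r / 2 / P2 < eps).
    { apply (Rmult_lt_reg_r P2); auto. replace (r / 2 / P2 * P2) with (r/2) by (field; lra). lra. }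
    lra. }
  assert (Hge : forall k n, (k <= n)%nat -> d (y n) (y k) + s n <= s k).
  { intros k n Hkn. replace n with ((n - k) + k)%nat by lia. apply Hnest. }
  assert (Hcau : cauchy_seq d y).
  { intros eps Heps. destruct (Hsmall (eps/2)) as [N HN]; [lra|]. exists N.
    intros m n Hm1 Hn1. pose proof (Hge N m Hm1). pose proof (Hge N n Hn1).
    pose proof (d_tri (y m) (y N) (y n)). rewrite (d_sym (y N) (y n)) in H1.
    pose proof (Hspos m). pose proof (Hspos n). lra. }
  destruct (Hc y Hcau) as [l Hl].
  assert (Hlim : forall k, d l (y k) <= s k).
  { intro k. apply le_of_lt_all. intros eta Heta.
    destruct (Hl eta Heta) as [M HM].
    specialize (HM (Nat.max M k) ltac:(lia)).
    pose proof (Hge k (Nat.max M k) ltac:(lia)).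
    pose proof (Hspos (Nat.max M k)).
    pose proof (d_tri l (y (Nat.max M k)) (y k)). rewrite d_sym in HM. lra. }
  destruct (Hcov l) as [N HN].
  destruct (HQ N) as [_ [_ [_ H4]]]. apply (H4 l); auto. apply (Hlim (S N)).
Qed.
End M.

Definition hsemi_le {X : Type} (dX : X -> X -> R) (A C : X -> Prop) (e : R) :=
  forall a, A a -> forall eta, 0 < eta -> exists c, C c /\ dX a c < e + eta.

Definition EE {X L : Type} (dX : X -> X -> R) (F : nat -> L -> X -> Prop) (e : R) (N : nat) (l : L) :=
  forall p q, (N <= p)%nat -> (N <= q)%nat -> hsemi_le dX (F p l) (F q l) e.

Section B1.
Context {X L : Type} (dX : X -> X -> R) (dL : L -> L -> R) (HmX : is_metric dX) (HmL : is_metric dL)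
  (F : nat -> L -> X -> Prop) (G : L -> X -> Prop)
  (HFa : forall n l, subset (G l) (F n l))
  (HFb : forall l eps, 0 < eps -> exists N, forall p, (N <= p)%nat -> hsemi_small dX (F p l) (G l) eps)
  (HFc : forall n l0 eps, 0 < eps -> exists delta, 0 < delta /\
      forall l, dL l l0 < delta -> hdist_small dX (F n l) (F n l0) eps).

Lemma EE_closed e N : subset (closure dL (EE dX F e N)) (EE dX F e N).
Proof.
  intros l Hl p q Hp Hq a Ha eta Heta.
  destruct (HFc p l (eta/3)) as [d1 [Hd1 H1]]; [lra|].
  destruct (HFc q l (eta/3)) as [d2 [Hd2 H2]]; [lra|].
  destruct (Hl (Rmin d1 d2)) as [l' [El' Hll']]; [apply Rmin_glb_lt; lra|].
  rewrite (d_sym dL HmL) in Hll'.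
  pose proof (Rmin_l d1 d2). pose proof (Rmin_r d1 d2).
  destruct (H1 l' ltac:(lra)) as [_ H1b]. destruct (H2 l' ltac:(lra)) as [H2a _].
  destruct (H1b a Ha) as [a' [Ha' Haa']].
  destruct (El' p q Hp Hq a' Ha' (eta/3) ltac:(lra)) as [c' [Hc' Hac']].
  destruct (H2a c' Hc') as [c [Hc Hcc]].
  exists c. split; auto.
  pose proof (d_tri dX HmX a a' c). pose proof (d_tri dX HmX a' c' c). lra.
Qed.

Lemma EE_cover e : 0 < e -> forall l, exists N, EE dX F e N l.
Proof.
  intros He l. destruct (HFb l (e/2) ltac:(lra)) as [N HN]. exists N.
  intros p q Hp Hq a Ha eta Heta. destruct (HN p Hp a Ha) as [c [Hc Hac]].
  exists c. split; [apply (HFa q); auto|]. lra.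
Qed.

Lemma EE_lim e N l : EE dX F e N l -> hsemi_le dX (F N l) (G l) e.
Proof.
  intros HE a Ha eta Heta.
  destruct (HFb l (eta/2) ltac:(lra)) as [p0 Hp0].
  destruct (HE N (Nat.max N p0) ltac:(lia) ltac:(lia) a Ha (eta/2) ltac:(lra)) as [c' [Hc' Hac']].
  destruct (Hp0 (Nat.max N p0) ltac:(lia) c' Hc') as [c [Hc Hcc]].
  exists c; split; auto. pose proof (d_tri dX HmX a c' c). lra.
Qed.

Lemma good_lower e l0 N r : 0 < e -> 0 < r -> subset (ball dL l0 r) (EE dX F e N) ->
  exists delta, 0 < delta /\ forall l, dL l l0 < delta -> hsemi_small dX (G l0) (G l) (3 * e).
Proof.
  intros He Hr Hsub.
  destruct (HFc N l0 e He) as [d1 [Hd1 H1]].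
  exists (Rmin r d1). split; [apply Rmin_glb_lt; lra|].
  intros l Hl. pose proof (Rmin_l r d1). pose proof (Rmin_r r d1).
  assert (HE : EE dX F e N l) by (apply Hsub; unfold ball; lra).
  destruct (H1 l ltac:(lra)) as [_ H1b].
  intros a Ha. destruct (H1b a (HFa N l0 a Ha)) as [a' [Ha' Haa']].
  destruct (EE_lim e N l HE a' Ha' e He) as [c [Hc Hac]].
  exists c; split; auto. pose proof (d_tri dX HmX a a' c). lra.
Qed.

Lemma upper l0 eps : 0 < eps ->
  exists delta, 0 < delta /\ forall l, dL l l0 < delta -> hsemi_small dX (G l) (G l0) eps.
Proof.
  intros He. destruct (HFb l0 (eps/2) ltac:(lra)) as [N HN].
  destruct (HFc N l0 (eps/2) ltac:(lra)) as [d1 [Hd1 H1]].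
  exists d1; split; auto. intros l Hl a Ha.
  destruct (H1 l Hl) as [H1a _].
  destruct (H1a a (HFa N l a Ha)) as [a' [Ha' Haa']].
  destruct (HN N (le_n N) a' Ha') as [c [Hc Hac]].
  exists c; split; auto. pose proof (d_tri dX HmX a a' c). lra.
Qed.

Lemma bad_nd (HcL : forall u, cauchy_seq dL u -> exists l, seq_converges dL u l) e : 0 < e ->
  nowhere_dense dL (fun l => ~ exists N r, 0 < r /\ subset (ball dL l r) (EE dX F e N)).
Proof.
  intros He [x [r [Hr Hsub]]].
  destruct (baire dL HmL HcL (EE dX F e) (EE_closed e) (EE_cover e He) x r Hr)
    as [N [y [s [Hs [H1 H2]]]]].
  assert (Hy : closure dL (fun l => ~ exists N r, 0 < r /\ subset (ball dL l r) (EE dX F e N)) y).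
  { apply Hsub. apply H2. unfold ball. rewrite (d_refl dL HmL). lra. }
  destruct (Hy (s/2) ltac:(lra)) as [b [Hb Hyb]].
  apply Hb. exists N, (s/2). split; [lra|].
  intros z Hz. apply H1. unfold ball in *. pose proof (d_tri dL HmL z b y).
  rewrite (d_sym dL HmL b y) in H. lra.
Qed.
End B1.

Section C.
Context {T : Type} (d : T -> T -> R) (Hm : is_metric d).

Lemma nat_above (a : R) : exists n : nat, a < INR n.
Proof.
  destruct (archimed (Rmax a 0)) as [H _].
  assert (Hz : (0 <= up (Rmax a 0))%Z).
  { apply le_IZR. pose proof (Rmax_r a 0). lra. }
  exists (Z.to_nat (up (Rmax a 0))). rewrite INR_IZR_INZ, Z2Nat.id by auto.
  pose proof (Rmax_l a 0). lra.
Qed.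

Lemma compact_bounded (x0 : T) K : is_compact d K -> is_bounded d K.
Proof.
  intros HK.
  destruct (HK nat (fun n => ball d x0 (INR n))) as [l Hl].
  - intro n. apply ball_open; auto.
  - intros x _. destruct (nat_above (d x x0)) as [n Hn]. exists n. exact Hn.
  - exists x0, (fold_right Rplus 0 (map INR l)). intros a Ha.
    destruct (Hl a Ha) as [i [Hi Hai]]. unfold ball in Hai.
    assert (forall l', In i l' -> INR i <= fold_right Rplus 0 (map INR l')).
    { induction l'; simpl; [tauto|]. intros [->|Hin].
      - assert (0 <= fold_right Rplus 0 (map INR l')).
        { clear. induction l'; simpl; [lra|]. pose proof (pos_INR a). lra. }
        lra.
      - pose proof (pos_INR a0). specialize (IHl' Hin). lra. }
    specialize (H l Hi). lra.
Qed.

Lemma unif_mod (K : T -> Prop) (f : T -> T) : is_compact d K ->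
  (forall c, K c -> forall eps, 0 < eps -> exists delta, 0 < delta /\
      forall y, d c y < delta -> d (f c) (f y) < eps) ->
  forall eps, 0 < eps -> exists eta, 0 < eta /\
      forall c y, K c -> d c y < eta -> d (f c) (f y) < eps.
Proof.
  intros HK Hf eps Heps.
  assert (Hdel : forall i : {c | K c}, {delta | 0 < delta /\
      forall y, d (proj1_sig i) y < delta -> d (f (proj1_sig i)) (f y) < eps / 2}).
  { intros [c Hc]. apply constructive_indefinite_description. simpl.
    apply Hf; auto; lra. }
  set (del := fun i => proj1_sig (Hdel i)).
  destruct (HK {c | K c} (fun i => ball d (proj1_sig i) (del i / 2))) as [l Hl].
  - intro i. apply ball_open; auto.
  - intros x Hx. exists (exist _ x Hx). unfold ball; simpl. rewrite d_refl; auto.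
    unfold del, Rdiv. apply Rmult_lt_0_compat; [exact (proj1 (proj2_sig (Hdel (exist _ x Hx)))) | lra].
  - set (mn := fold_right (fun i acc => Rmin (del i / 2) acc) 1 l).
    assert (Hdp : forall i, 0 < del i) by (intro i; unfold del; exact (proj1 (proj2_sig (Hdel i)))).
    assert (Hmn : 0 < mn /\ forall i, In i l -> mn <= del i / 2).
    { unfold mn; clear Hl. induction l; simpl.
      - split; [lra | tauto].
      - destruct IHl as [H1 H2]. split.
        + apply Rmin_glb_lt; auto. specialize (Hdp a). lra.
        + intros i [Hia|Hin]; [rewrite <- Hia; apply Rmin_l|]. eapply Rle_trans; [apply Rmin_r|]. auto. }
    destruct Hmn as [Hmn1 Hmn2].
    exists mn. split; auto. intros c y Hc Hcy.
    destruct (Hl c Hc) as [i [Hi Hci]]. unfold ball in Hci.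
    specialize (Hmn2 i Hi). pose proof (Hdp i).
    assert (Hi2 := proj2_sig (Hdel i)). simpl in Hi2. destruct Hi2 as [_ Hi2].
    fold (del i) in Hi2.
    set (ci := proj1_sig i) in *.
    assert (E1 : d ci c < del i) by (rewrite (d_sym d Hm); lra).
    assert (E2 : d ci y < del i).
    { pose proof (d_tri d Hm ci c y) as T1. rewrite (d_sym d Hm ci c) in T1. lra. }
    pose proof (Hi2 c E1) as F1. pose proof (Hi2 y E2) as F2.
    pose proof (d_tri d Hm (f c) (f ci) (f y)) as T2. rewrite (d_sym d Hm (f c) (f ci)) in T2. lra.
Qed.
End C.

Lemma hsemi_mono {X : Type} (dX : X -> X -> R) A C e e' :
  e <= e' -> hsemi_small dX A C e -> hsemi_small dX A C e'.
Proof. intros He H a Ha. destruct (H a Ha) as [c [Hc Hac]]. exists c; split; auto; lra. Qed.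

Theorem theorem3p3
  (X : Type) (dX : X -> X -> R) (HX : complete_metric dX)
  (Lam : Type) (dL : Lam -> Lam -> R) (HL : complete_metric dL)
  (S : Lam -> R -> R -> X -> X) (HS : forall lam, is_process dX (S lam))
  (A : Lam -> R -> X -> Prop)
  (L1 : forall lam, is_pullback_attractor dX (S lam) (A lam))
  (Hyp :
     (exists D : X -> Prop,
        is_compact dX D /\
        (forall lam t, subset (A lam t) D) /\
        (forall s t, s <= t -> forall K, is_compact dX K ->
           forall lam0 eps, 0 < eps -> exists delta, 0 < delta /\
             forall lam, dL lam lam0 < delta -> forall x, K x ->
               dX (S lam t s x) (S lam0 t s x) < eps))
     \/
     (exists D : X -> Prop,
        is_bounded dX D /\
        (forall lam t, subset (A lam t) D) /\
        (forall s t, s <= t -> forall K, is_bounded dX K ->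
           forall lam0 eps, 0 < eps -> exists delta, 0 < delta /\
             forall lam, dL lam lam0 < delta -> forall x, K x ->
               dX (S lam t s x) (S lam0 t s x) < eps) /\
        (forall lam0 t, exists delta, 0 < delta /\
           is_compact dX (closure dX (fun x =>
             exists lam, ball dL lam0 delta lam /\ A lam t x)))))
  : exists Lstar : Lam -> Prop,
      residual dL Lstar /\
      forall t lam0, Lstar lam0 ->
        forall eps, 0 < eps -> exists delta, 0 < delta /\
          forall lam, dL lam lam0 < delta ->
            hdist_small dX (A lam t) (A lam0 t) eps.
Proof.
  destruct HX as [HmX HcX]; destruct HL as [HmL HcL].
  destruct (classic (exists x0 : X, True)) as [[x0 _]|Hno].
  2: { exists (fun _ => True). split.
       - exists (fun _ _ => False). split.
         + intros n [x [e [He Hs]]].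
           assert (Hx : closure dL (fun _ : Lam => False) x).
           { apply Hs. unfold ball. rewrite (d_refl dL HmL). lra. }
           destruct (Hx 1 ltac:(lra)) as [a [[] _]].
         + intros x; split; [tauto|]. intros [n []].
       - intros t lam0 _ eps Heps. exists 1. split; [lra|]. intros lam _.
         split; intros a _; exfalso; apply Hno; exists a; auto. }
  assert (Hcom : exists D, is_bounded dX D /\ (forall lam t, subset (A lam t) D) /\
     (forall s t, s <= t -> forall lam0 eps, 0 < eps -> exists delta, 0 < delta /\
        forall lam, dL lam lam0 < delta -> forall x, D x ->
          dX (S lam t s x) (S lam0 t s x) < eps)).
  { destruct Hyp as [[D [HD1 [HD2 HD3]]]|[D [HD1 [HD2 [HD3 _]]]]]; exists D.
    - split; [apply (compact_bounded dX HmX x0 D HD1)|]. split; auto.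

    - split; auto. }
  clear Hyp. destruct Hcom as [D [HDb [HDA HDc]]].
  set (F := fun (q : R) (n : nat) (lam : Lam) (y : X) =>
              exists b, D b /\ y = S lam q (q - INR n) b).
  assert (HFa : forall q n lam, subset (A lam q) (F q n lam)).
  { intros q n lam y Hy. destruct (L1 lam) as [_ [Hinv _]].
    pose proof (pos_INR n).
    destruct (proj1 (Hinv q (q - INR n) ltac:(lra) y) Hy) as [x [Hx ->]].
    exists x. split; auto. apply (HDA lam (q - INR n)); auto. }
  assert (HFb : forall q lam eps, 0 < eps -> exists N, forall p, (N <= p)%nat ->
              hsemi_small dX (F q p lam) (A lam q) eps).
  { intros q lam eps Heps. destruct (L1 lam) as [_ [_ [Hatt _]]].
    destruct (Hatt D HDb q eps Heps) as [s0 Hs0].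
    destruct (nat_above (q - s0)) as [N HN]. exists N. intros p Hp.
    apply le_INR in Hp. pose proof (pos_INR N).
    apply (Hs0 (q - INR p)); lra. }
  assert (HFc : forall q n lam0 eps, 0 < eps -> exists delta, 0 < delta /\
      forall lam, dL lam lam0 < delta -> hdist_small dX (F q n lam) (F q n lam0) eps).
  { intros q n lam0 eps Heps. pose proof (pos_INR n).
    destruct (HDc (q - INR n) q ltac:(lra) lam0 eps Heps) as [delta [Hd Hcc]].
    exists delta. split; auto. intros lam Hl. split.
    - intros y [b [Hb ->]]. exists (S lam0 q (q - INR n) b). split.
      + exists b; auto.
      + apply Hcc; auto.
    - intros y [b [Hb ->]]. exists (S lam q (q - INR n) b). split.
      + exists b; auto.
      + rewrite (d_sym dX HmX). apply Hcc; auto. }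
  set (Good := fun (k m : nat) (lam0 : Lam) => exists N r, 0 < r /\
         subset (ball dL lam0 r) (EE dX (F (- INR k)) (/ (INR m + 1)) N)).
  exists (fun lam0 => forall k m, Good k m lam0). split.
  - exists (fun n lam => ~ Good (fst (Cantor.of_nat n)) (snd (Cantor.of_nat n)) lam). split.
    + intro n. apply (bad_nd dX dL HmX HmL (F (- INR (fst (Cantor.of_nat n))))
                   (fun l => A l (- INR (fst (Cantor.of_nat n))))); auto.
      apply Rinv_0_lt_compat. pose proof (pos_INR (snd (Cantor.of_nat n))). lra.
    + intro lam. split.
      * intro H. apply NNPP; intro H2. apply H. intros k m. apply NNPP; intro H3.
        apply H2. exists (Cantor.to_nat (k, m)). rewrite Cantor.cancel_of_to. exact H3.
      * intros [n Hn] H. apply Hn. apply H.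
  - intros t lam0 Hgood.
    assert (Hq : forall k eta, 0 < eta -> exists delta, 0 < delta /\ forall lam,
        dL lam lam0 < delta -> hdist_small dX (A lam (- INR k)) (A lam0 (- INR k)) eta).
    { intros k eta Heta.
      destruct (nat_above (3 / eta)) as [m Hm].
      destruct (Hgood k m) as [N [r [Hr Hsub]]].
      assert (He : 0 < / (INR m + 1)).
      { apply Rinv_0_lt_compat. pose proof (pos_INR m). lra. }
      destruct (good_lower dX dL HmX (F (- INR k)) (fun l => A l (- INR k)) (HFa _) (HFb _) (HFc _)
                  _ lam0 N r He Hr Hsub) as [d1 [Hd1 H1]].
      destruct (upper dX dL HmX (F (- INR k)) (fun l => A l (- INR k)) (HFa _) (HFb _) (HFc _)
                  lam0 eta Heta) as [d2 [Hd2 H2]].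
      exists (Rmin d1 d2). split; [apply Rmin_glb_lt; auto|].
      intros lam Hl. pose proof (Rmin_l d1 d2). pose proof (Rmin_r d1 d2).
      split.
      - apply H2; lra.
      - apply (hsemi_mono dX _ _ (3 * / (INR m + 1))); [|apply H1; lra].
        assert (3 < eta * (INR m + 1)).
        { apply (Rmult_lt_reg_r (/ eta)). apply Rinv_0_lt_compat; lra.
          replace (eta * (INR m + 1) * / eta) with (INR m + 1) by (field; lra).
          unfold Rdiv in Hm. lra. }
        apply (Rmult_le_reg_r (INR m + 1)). pose proof (pos_INR m); lra.
        replace (3 * / (INR m + 1) * (INR m + 1)) with 3 by (field; pose proof (pos_INR m); lra).
        lra. }
    intros eps Heps.
    destruct (nat_above (- t)) as [k Hk]. set (q := - INR k).
    assert (Hqt : q <= t) by (unfold q; lra).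
    destruct (L1 lam0) as [Hcpt0 [Hinv0 _]].
    destruct (unif_mod dX HmX (A lam0 q) (S lam0 t q) (Hcpt0 q)) with (eps := eps / 2)
      as [eta [Heta Hmod]]; [| lra |].
    { intros c _ e He. destruct (HS lam0) as [_ [_ Hcont]].
      destruct (Hcont c t q Hqt e He) as [dd [Hdd Hdd2]].
      exists dd. split; auto. intros y Hy. apply Hdd2; auto; rewrite Rminus_diag, Rabs_R0; auto. }
    destruct (Hq k eta Heta) as [d1 [Hd1 H1]]. fold q in H1.
    destruct (HDc q t Hqt lam0 (eps/2) ltac:(lra)) as [d2 [Hd2 H2]].
    exists (Rmin d1 d2). split; [apply Rmin_glb_lt; auto|].
    intros lam Hl. pose proof (Rmin_l d1 d2). pose proof (Rmin_r d1 d2).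
    destruct (H1 lam ltac:(lra)) as [H1a H1b].
    destruct (L1 lam) as [_ [Hinv _]].
    split.
    + intros y Hy. destruct (proj1 (Hinv t q Hqt y) Hy) as [x [Hx ->]].
      destruct (H1a x Hx) as [c [Hc Hxc]].
      exists (S lam0 t q c). split.
      * apply (proj2 (Hinv0 t q Hqt _)). exists c; auto.
      * pose proof (H2 lam ltac:(lra) x (HDA _ _ x Hx)).
        pose proof (Hmod c x Hc ltac:(rewrite (d_sym dX HmX); lra)).
        pose proof (d_tri dX HmX (S lam t q x) (S lam0 t q x) (S lam0 t q c)) as T6.
        rewrite (d_sym dX HmX (S lam0 t q x) (S lam0 t q c)) in T6. lra.
    + intros y Hy. destruct (proj1 (Hinv0 t q Hqt y) Hy) as [c [Hc ->]].
      destruct (H1b c Hc) as [x [Hx Hcx]].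
      exists (S lam t q x). split.
      * apply (proj2 (Hinv t q Hqt _)). exists x; auto.
      * pose proof (H2 lam ltac:(lra) x (HDA _ _ x Hx)).
        pose proof (Hmod c x Hc Hcx).
        pose proof (d_tri dX HmX (S lam0 t q c) (S lam0 t q x) (S lam t q x)) as T6.
        rewrite (d_sym dX HmX (S lam0 t q x) (S lam t q x)) in T6. lra.
Qed.
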